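(* Let $\rho=12\cdots(k-1)k^a$ for some $a\ge1$, $k\ge1$ (a strictly increasing run $1,\dots,k$ followed by $a-1$ further copies of $k$). If patterns $\sigma$ and $\tau$ are strongly partition equivalent, then $p_n(\rho,\sigma)=p_n(\rho,\tau)$ for all $n\ge0$.
   Context: Set partitions are written in canonical sequential form (restricted growth words; $\pi_j$ is the index of the block containing $j$, blocks ordered by their minima, so the $i$-th block is the set of positions carrying letter $i$). Pattern containment means having a subsequence order-isomorphic to the pattern. $p_n(T)$ is the number of partitions of $[n]$ avoiding all patterns in $T$. Patterns $\sigma,\tau$ are strongly partition equivalent if there is a bijection $f$ from $\sigma$-avoiding partitions to $\tau$-avoiding partitions such that for every $\sigma$-avoiding partition $\pi$, $f(\pi)$ has the same number of blocks as $\pi$ and for each $i$ the $i$-th block of $f(\pi)$ has the same size as the $i$-th block of $\pi$. *)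

(* Defs.v *)
From mathcomp Require Import all_boot.
Set Implicit Arguments. Unset Strict Implicit. Unset Printing Implicit Defensive.

(* A set partition of [n] in canonical sequential form: a restricted growth
   word w of length n with letters 1,2,...: w_1 = 1 (if n > 0) and each letter
   is at most 1 + the maximum of the preceding letters. *)
Fixpoint rgf_from (m : nat) (w : seq nat) : bool :=
  if w is x :: w' then (0 < x) && (x <= m.+1) && rgf_from (maxn m x) w'
  else true.
Definition is_rgf (w : seq nat) : bool := rgf_from 0 w.

Definition order_iso (u v : seq nat) : bool :=
  (size u == size v) &&
  [forall i : 'I_(size u), forall j : 'I_(size u),
    (nth 0 u i <= nth 0 u j) == (nth 0 v i <= nth 0 v j)].

Definition contains (pi p : seq nat) : bool :=
  [exists m : (size pi).-tuple bool, order_iso (mask m pi) p].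
Definition avoids (pi p : seq nat) : bool := ~~ contains pi p.

(* p_n(T): number of partitions of [n] avoiding every pattern of T.
   A word of length n with letters in {0..n} is encoded as an n-tuple of 'I_n.+1;
   every RGF of length n has letters in {1..n}. *)
Definition pn (T : seq (seq nat)) (n : nat) : nat :=
  #|[set t : n.-tuple 'I_n.+1 |
      is_rgf (map val t) && all (avoids (map val t)) T]|.

Definition block_sizes (w : seq nat) : seq nat :=
  [seq count_mem i w | i <- iota 1 (\max_(x <- w) x)].

Definition strongly_partition_equivalent (sigma tau : seq nat) : Prop :=
  exists f : seq nat -> seq nat,
    (forall pi, is_rgf pi -> avoids pi sigma ->
        is_rgf (f pi) /\ avoids (f pi) tau /\ block_sizes (f pi) = block_sizes pi) /\
    (forall pi1 pi2, is_rgf pi1 -> avoids pi1 sigma -> is_rgf pi2 -> avoids pi2 sigma ->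
        f pi1 = f pi2 -> pi1 = pi2) /\
    (forall pi', is_rgf pi' -> avoids pi' tau ->
        exists pi, is_rgf pi /\ avoids pi sigma /\ f pi = pi').

Definition rho_pat (k a : nat) : seq nat := iota 1 k ++ nseq a.-1 k.

(* Main.v *)
Require Import Defs.
From mathcomp Require Import all_boot zify.

Lemma contains_subseq pi p s : subseq s pi -> order_iso s p -> contains pi p.
Proof.
case/subseqP=> m Hm ->; move=> H; apply/existsP.
by exists (@Tuple _ _ m (introT eqP Hm)).
Qed.

Lemma contains_inv pi p : contains pi p -> exists2 s, subseq s pi & order_iso s p.
Proof. by case/existsP=> m H; exists (mask m pi) => //; apply: mask_subseq. Qed.

Lemma oisoP u v : order_iso u v -> size u = size v /\
  forall i j, i < size u -> j < size u ->
   (nth 0 u i <= nth 0 u j) = (nth 0 v i <= nth 0 v j).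
Proof.
case/andP=> /eqP Hs /forallP H; split=> // i j Hi Hj.
by have /forallP/(_ (Ordinal Hj))/eqP := H (Ordinal Hi).
Qed.

Lemma oiso_intro u v : size u = size v ->
  (forall i j, i < size u -> j < size u ->
   (nth 0 u i <= nth 0 u j) = (nth 0 v i <= nth 0 v j)) -> order_iso u v.
Proof.
move=> Hs H; apply/andP; split; first by apply/eqP.
by apply/forallP=> i; apply/forallP=> j; apply/eqP; apply: H.
Qed.

Lemma oiso_map f p : {mono f : x y / x <= y} -> order_iso (map f p) p.
Proof.
move=> Hf; apply: oiso_intro; first by rewrite size_map.
rewrite size_map => i j Hi Hj.
by rewrite !(nth_map 0) // Hf.
Qed.

Lemma rgf_pos m w : rgf_from m w -> all (fun x => 0 < x) w.
Proof.
elim: w m => //= x w IH m /andP[/andP[-> _] H] /=; exact: IH H.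
Qed.

Lemma rgf_le m w : rgf_from m w -> all (fun x => x <= m + size w) w.
Proof.
elim: w m => //= x w IH m /andP[/andP[_ Hx] H] /=.
rewrite addnS -addSn (leq_trans Hx) ?leq_addr //=.
apply: sub_all (IH _ H) => y /= Hy; apply: (leq_trans Hy).
by rewrite leq_add2r geq_max leqnSn.
Qed.

Lemma subseq_nseq a j (w : seq nat) : a <= count_mem j w -> subseq (nseq a j) w.
Proof.
elim: w a => [|x w IH] a; first by rewrite /= leqn0 => /eqP ->.
rewrite [count _ _]/=; case: eqP => [->|Hne].
  case: a => [|a] Ha; first by [].
  by rewrite /= eqxx; apply: IH.
rewrite add0n => Ha; apply: subseq_trans (IH _ Ha) (subseq_cons _ _).
Qed.

Lemma subseq_run a m i j (w : seq nat) : 0 < a -> rgf_from m w -> m < i -> i <= j ->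
  a <= count_mem j w -> subseq (iota i (j - i) ++ nseq a j) w.
Proof.
move=> a0; elim: w m i => [|x w IH] m i.
  by move=> _ _ _; rewrite leqn0 => /eqP Ha; rewrite Ha in a0.
rewrite [rgf_from _ _]/= [count _ _]/=.
move=> /andP[/andP[x0 xm] H] mi; rewrite leq_eqVlt => /orP[/eqP ij|ij] Hc.
  by rewrite ij subnn cat0s; apply: subseq_nseq; exact: Hc.
case: (x =P i) => [xi|xi].
  have -> : j - i = (j - i.+1).+1 by rewrite subnS prednK // subn_gt0.
  rewrite [iota _ _]/= cat_cons xi /= eqxx; apply: (IH i).
  - by move: H; rewrite xi (maxn_idPr (ltnW mi)).
  - by [].
  - by [].
  by move: Hc; rewrite xi (ltn_eqF ij) add0n.
have xlt : x < i by rewrite ltn_neqAle; apply/andP; split; [apply/eqP|exact: leq_trans xm mi].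
apply: subseq_trans (subseq_cons w x); apply: (IH (maxn m x)) => //.
- by rewrite gtn_max mi.
- exact: ltnW.
- by move: Hc; rewrite (_ : (x == j) = false) //; apply: ltn_eqF; exact: ltn_trans ij.
Qed.

Lemma nth_rho k a q : q < k + a.-1 ->
  nth 0 (rho_pat k a) q = if q < k then q.+1 else k.
Proof.
move=> Hq; rewrite /rho_pat nth_cat size_iota; case: ltnP => H.
  by rewrite nth_iota // add1n.
by rewrite nth_nseq; case: ifP => //; lia.
Qed.

Lemma rho_back k a (w : seq nat) j : 0 < k -> 0 < a -> is_rgf w -> k <= j ->
  a <= count_mem j w -> contains w (rho_pat k a).
Proof.
move=> k0 a0 Hw kj Hc.
pose f x := if x < k then x else x + (j - k).
have Hs : subseq (iota 1 k.-1 ++ nseq a j) w.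
  have Hj1 : 1 <= j by lia.
  have Hr := @subseq_run a 0 1 j w a0 Hw (ltn0Sn 0) Hj1 Hc.
  apply: subseq_trans Hr.
  apply: cat_subseq => //.
  have -> : j - 1 = k.-1 + (j - k) by lia.
  by rewrite iotaD; apply: prefix_subseq.
apply: (@contains_subseq _ _ _ Hs).
have -> : iota 1 k.-1 ++ nseq a j = map f (rho_pat k a).
  rewrite /rho_pat; have -> : iota 1 k = iota 1 k.-1 ++ [:: k].
    by rewrite -{1}(prednK k0) -[k.-1.+1]addn1 iotaD add1n prednK.
  rewrite map_cat map_cat /= -catA.
  rewrite map_id_in; last first.
    by move=> x; rewrite mem_iota /f => /andP[_ H]; case: ifP => //; lia.
  congr (_ ++ _); rewrite map_nseq /= /f ltnn subnKC //.
  by rewrite -{1}(prednK a0).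
apply: oiso_map => x y; rewrite /f; case: ifP; case: ifP; lia.
Qed.

Lemma size_rho k a : size (rho_pat k a) = k + a.-1.
Proof. by rewrite /rho_pat size_cat size_iota size_nseq. Qed.

Lemma rho_fwd k a (w : seq nat) : 0 < k -> 0 < a -> is_rgf w ->
  contains w (rho_pat k a) -> exists j, k <= j /\ a <= count_mem j w.
Proof.
move=> k0 a0 Hw /contains_inv [s Hs Ho].
have [Hsz Hn] := oisoP _ _ Ho.
rewrite size_rho in Hsz.
have Hpos : forall x, x \in s -> 0 < x.
  move=> x /(mem_subseq Hs) Hx; exact: (allP (rgf_pos _ _ Hw)) x Hx.
have HA : forall i, i < k -> i < nth 0 s i.
  elim=> [|i IH] Hi.
    by apply: Hpos; apply: mem_nth; rewrite Hsz; lia.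
  have Hlt : nth 0 s i < nth 0 s i.+1.
    rewrite ltnNge Hn ?Hsz; try lia.
    by rewrite !nth_rho; try lia; rewrite Hi (ltnW Hi); lia.
  by apply: leq_ltn_trans Hlt; apply: IH; lia.
exists (nth 0 s k.-1); split.
  by have := HA k.-1; rewrite prednK //; apply; lia.
apply: leq_trans (leq_count_subseq _ Hs).
have Heq : forall q, q < size (drop k.-1 s) -> nth 0 (drop k.-1 s) q = nth 0 s k.-1.
  move=> q; rewrite size_drop nth_drop Hsz => Hq.
  apply/eqP; rewrite eqn_leq !Hn ?Hsz; try lia.
  by rewrite !nth_rho; try lia; case: ifP; case: ifP; lia.
have Hall : all (pred1 (nth 0 s k.-1)) (drop k.-1 s).
  by apply/allP => x /(nthP 0) [q Hq <-] /=; rewrite Heq.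
set j := nth 0 s k.-1 in Heq Hall *.
rewrite -(cat_take_drop k.-1 s) count_cat.
apply: leq_trans (leq_addl _ _).
by rewrite (eqP (etrans (esym (all_count _ _)) Hall)) size_drop Hsz; lia.
Qed.

Lemma sum_counts (w : seq nat) r : uniq r ->
  sumn [seq count_mem i w | i <- r] = count (mem r) w.
Proof.
elim: r => [|y r IH] /=; first by rewrite count_pred0.
case/andP=> yr ur; rewrite IH //.
have -> : count (mem (y :: r)) w = count (predU (pred1 y) (mem r)) w.
  by apply: eq_count => x; rewrite /= in_cons.
apply/eqP; rewrite -(eqn_add2r (count (predI (pred1 y) (mem r)) w)) count_predUI.
rewrite (_ : count (predI _ _) w = 0) ?addn0 //.
rewrite (eq_count (a2 := pred0)) ?count_pred0 // => x /=.
by case: eqP => // ->; rewrite (negbTE yr).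
Qed.

Lemma size_bs (w : seq nat) : is_rgf w -> size w = sumn (block_sizes w).
Proof.
move=> Hw; rewrite /block_sizes sum_counts ?iota_uniq //.
apply/esym/eqP; rewrite -all_count; apply/allP => x xw /=.
rewrite mem_iota (allP (rgf_pos _ _ Hw)) //= add1n ltnS.
exact: (@leq_bigmax_seq _ _ xpredT id).
Qed.

Lemma bs_char k a (w : seq nat) : 0 < a -> is_rgf w ->
  (exists j, k <= j /\ a <= count_mem j w) <->
  (exists idx, idx < size (block_sizes w) /\ k <= idx.+1 /\ a <= nth 0 (block_sizes w) idx).
Proof.
move=> a0 Hw; rewrite /block_sizes size_map size_iota; split.
  case=> j [kj Hc].
  have jw : j \in w by rewrite -has_pred1 has_count; exact: leq_trans Hc.
  have j0 : 0 < j := (allP (rgf_pos _ _ Hw)) j jw.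
  have jM : j <= \max_(x <- w) x := @leq_bigmax_seq _ _ xpredT id _ jw isT.
  have Hl : j.-1 < \max_(x <- w) x by lia.
  exists j.-1; rewrite (prednK j0); split=> //; split=> //.
  by rewrite (nth_map 0) ?size_iota // nth_iota // add1n (prednK j0).
case=> idx [Hi [Hk Hc]]; exists idx.+1; split => //.
by move: Hc; rewrite (nth_map 0) ?size_iota ?nth_iota // add1n.
Qed.

Lemma avoids_rho_bs k a (w1 w2 : seq nat) : 0 < k -> 0 < a -> is_rgf w1 -> is_rgf w2 ->
  block_sizes w1 = block_sizes w2 ->
  avoids w1 (rho_pat k a) = avoids w2 (rho_pat k a).
Proof.
move=> k0 a0 H1 H2 Hb; rewrite /avoids; congr negb.
apply/idP/idP => Hc.
  have /(bs_char k _ _ a0 H1) := rho_fwd _ _ _ k0 a0 H1 Hc.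
  rewrite Hb => /(bs_char k _ _ a0 H2) [j [kj Hj]]; exact: rho_back _ _ _ _ k0 a0 H2 kj Hj.
have /(bs_char k _ _ a0 H2) := rho_fwd _ _ _ k0 a0 H2 Hc.
rewrite -Hb => /(bs_char k _ _ a0 H1) [j [kj Hj]]; exact: rho_back _ _ _ _ k0 a0 H1 kj Hj.
Qed.

Definition enc n (s : seq nat) : n.-tuple 'I_n.+1 := [tuple inord (nth 0 s i) | i < n].

Lemma enc_val n (s : seq nat) : size s = n -> all (fun x => x <= n) s ->
  map val (enc n s) = s.
Proof.
move=> Hs Ha; apply: (@eq_from_nth _ 0); first by rewrite size_map size_tuple.
rewrite size_map size_tuple => i Hi.
rewrite (nth_map ord0) ?size_tuple //.
have -> := nth_mktuple (fun i : 'I_n => inord (nth 0 s i) : 'I_n.+1) ord0 (Ordinal Hi).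
rewrite /= inordK // ltnS; apply: (allP Ha); apply: mem_nth; by rewrite Hs.
Qed.

Lemma tuple_val n (t : n.-tuple 'I_n.+1) : enc n (map val t) = t.
Proof.
apply: val_inj; apply: (inj_map val_inj); apply: enc_val; first by rewrite size_map size_tuple.
apply/allP => x /mapP [y _ ->]. by rewrite -ltnS (ltn_ord y).
Qed.

Theorem theorem4p5 (k a : nat) (sigma tau : seq nat) :
  1 <= k -> 1 <= a -> is_rgf sigma -> is_rgf tau ->
  strongly_partition_equivalent sigma tau ->
  forall n : nat, pn [:: rho_pat k a; sigma] n = pn [:: rho_pat k a; tau] n.
Proof.
move=> k0 a0 _ _ [f [Hf1 [Hf2 Hf3]]] n.
rewrite /pn /=.
set A := [set t : n.-tuple 'I_n.+1 | _].
set B := [set t : n.-tuple 'I_n.+1 | _].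
pose G (t : n.-tuple 'I_n.+1) := enc n (f (map val t)).
have HG : forall t, t \in A -> [/\ map val (G t) = f (map val t),
    is_rgf (f (map val t)), avoids (f (map val t)) tau &
    avoids (f (map val t)) (rho_pat k a)].
  move=> t; rewrite inE => /and3P [Hr Hrho /andP [Hs _]].
  have [Hr' [Ht Hb]] := Hf1 _ Hr Hs.
  split=> //; last by rewrite (avoids_rho_bs _ _ _ _ k0 a0 Hr' Hr Hb).
  apply: enc_val.
    by rewrite (size_bs _ Hr') Hb -(size_bs _ Hr) size_map size_tuple.
  have := rgf_le _ _ Hr'; rewrite add0n (size_bs _ Hr') Hb -(size_bs _ Hr) size_map size_tuple.
  by [].
have -> : B = G @: A.
  apply/eqP; rewrite eqEsubset; apply/andP; split; last first.
    apply/subsetP => _ /imsetP [t tA ->]; have [H1 H2 H3 H4] := HG t tA.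
    by rewrite inE H1 H2 H3 H4.
  apply/subsetP => t'; rewrite inE => /and3P [Hr Hrho /andP [Ht _]].
  have [pi [Hpr [Hps Hfp]]] := Hf3 _ Hr Ht.
  have [Hr' [_ Hb]] := Hf1 _ Hpr Hps.
  have Hsz : size pi = n.
    by rewrite (size_bs _ Hpr) -Hb Hfp -(size_bs _ Hr) size_map size_tuple.
  have Hv : map val (enc n pi) = pi.
    apply: enc_val => //; have := rgf_le _ _ Hpr; by rewrite add0n Hsz.
  apply/imsetP; exists (enc n pi).
    rewrite inE Hv Hpr Hps /= andbT.
    by rewrite (avoids_rho_bs _ _ _ _ k0 a0 Hpr Hr (etrans (esym Hb) (congr1 _ Hfp))).
  by rewrite /G Hv Hfp tuple_val.
rewrite card_in_imset //.
move=> t1 t2 H1 H2 Heq.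
have [E1 R1 _ _] := HG t1 H1; have [E2 R2 _ _] := HG t2 H2.
move: H1 H2; rewrite !inE => /and3P [Hr1 _ /andP [Hs1 _]] /and3P [Hr2 _ /andP [Hs2 _]].
have := Hf2 _ _ Hr1 Hs1 Hr2 Hs2; rewrite -E1 -E2 Heq => /(_ erefl) Hm.
by rewrite -(tuple_val _ t1) Hm tuple_val.
Qed.
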